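(* Agent-knowledge logic is decidable: there is an algorithm which, given any agent-knowledge formula $\varphi$, decides whether $\varphi$ is valid with respect to the class of all agent-knowledge models.
   Context: Agent-knowledge logic: pairwise disjoint sets $\mathbf{Prop}_A,\mathbf{Prop}_K,\mathbf{Nom}_A,\mathbf{Nom}_K$; formulas $\varphi ::= p_A \mid p_K \mid a \mid k \mid \neg\varphi \mid \varphi\land\varphi \mid \Box_A\varphi \mid \Box_K\varphi \mid @_a\varphi \mid @_k\varphi$ ($p_A\in\mathbf{Prop}_A$, $p_K\in\mathbf{Prop}_K$, $a\in\mathbf{Nom}_A$, $k\in\mathbf{Nom}_K$). An AK model is $(W_A, W_K, (R_y)_{y \in W_K}, (S_x)_{x \in W_A}, V)$ with $W_A,W_K$ non-empty sets, each $R_y$ a binary relation on $W_A$, each $S_x$ a binary relation on $W_K$, and $V$ sending $\mathbf{Prop}_A\cup\mathbf{Nom}_A$ to subsets of $W_A$ and $\mathbf{Prop}_K\cup\mathbf{Nom}_K$ to subsets of $W_K$, with $V(a)=\{a^V\}$ and $V(k)=\{k^V\}$ singletons for nominals. Satisfaction at $(x,y)\in W_A\times W_K$: $p_A$ iff $x\in V(p_A)$; $p_K$ iff $y\in V(p_K)$; $a$ iff $x=a^V$; $k$ iff $y=k^V$; Boolean clauses as usual; $\Box_A\varphi$ iff $(x',y)\models\varphi$ for all $x'$ with $xR_yx'$; $\Box_K\varphi$ iff $(x,y')\models\varphi$ for all $y'$ with $yS_xy'$; $@_a\varphi$ iff $(a^V,y)\models\varphi$; $@_k\varphi$ iff $(x,k^V)\models\varphi$.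 A formula is valid if it is satisfied at every pair $(x,y)$ of every AK model. *)

(* Defs.v *)
From Stdlib Require Import List Arith.
Import ListNotations.

(* ---------- Syntax of agent-knowledge logic ----------
   Prop_A, Prop_K, Nom_A, Nom_K are taken to be four disjoint countably
   infinite sets, each indexed by nat (disjointness is by construction:
   they are different constructors). *)
Inductive form : Type :=
| PA   : nat -> form
| PK   : nat -> form
| NA   : nat -> form
| NK   : nat -> form
| Neg  : form -> form
| Conj : form -> form -> form
| BoxA : form -> form
| BoxK : form -> form
| AtA  : nat -> form -> form
| AtK  : nat -> form -> form.

(* A nominal's valuation is a singleton {a^V}; we store the point a^V. *)
Record AKModel : Type := {
  WA : Type;
  WK : Type;
  WA_ne : inhabited WA;
  WK_ne : inhabited WK;
  RA : WK -> WA -> WA -> Prop;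
  SK : WA -> WK -> WK -> Prop;
  VPA : nat -> WA -> Prop;
  VPK : nat -> WK -> Prop;
  VNA : nat -> WA;
  VNK : nat -> WK
}.

Fixpoint sat (M : AKModel) (x : WA M) (y : WK M) (phi : form) : Prop :=
  match phi with
  | PA p => VPA M p x
  | PK p => VPK M p y
  | NA a => x = VNA M a
  | NK k => y = VNK M k
  | Neg f => ~ sat M x y f
  | Conj f g => sat M x y f /\ sat M x y g
  | BoxA f => forall x', RA M y x x' -> sat M x' y f
  | BoxK f => forall y', SK M x y y' -> sat M x y' f
  | AtA a f => sat M (VNA M a) y f
  | AtK k f => sat M x (VNK M k) f
  end.

Definition valid (phi : form) : Prop :=
  forall (M : AKModel) (x : WA M) (y : WK M), sat M x y phi.

(* ---------- A model of computation: mu-recursive functions ----------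
   Since classical axioms are admitted, "there is a Rocq function deciding
   validity" would be trivial; decidability is therefore expressed by the
   existence of a (partial) mu-recursive program. *)
Inductive rf : Type :=
| Zero : rf
| Succ : rf
| Proj : nat -> rf
| Comp : rf -> list rf -> rf
| Prec : rf -> rf -> rf
| Mu   : rf -> rf.

Inductive eval : rf -> list nat -> nat -> Prop :=
| eZero v : eval Zero v 0
| eSucc x v : eval Succ (x :: v) (S x)
| eProj i v : i < length v -> eval (Proj i) v (nth i v 0)
| eComp f gs v ws y : evals gs v ws -> eval f ws y -> eval (Comp f gs) v y
| ePrec0 f g v y : eval f v y -> eval (Prec f g) (0 :: v) y
| ePrecS f g n v r y :
    eval (Prec f g) (n :: v) r -> eval g (n :: r :: v) y ->
    eval (Prec f g) (S n :: v) y
| eMu f v n :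
    eval f (n :: v) 0 ->
    (forall m, m < n -> exists k, eval f (m :: v) (S k)) ->
    eval (Mu f) v n
with evals : list rf -> list nat -> list nat -> Prop :=
| esNil v : evals [] v []
| esCons g gs v w ws : eval g v w -> evals gs v ws -> evals (g :: gs) v (w :: ws).

Definition npair (a b : nat) : nat := (a + b) * (a + b + 1) / 2 + b.

Fixpoint code (phi : form) : nat :=
  match phi with
  | PA p => npair 0 p
  | PK p => npair 1 p
  | NA a => npair 2 a
  | NK k => npair 3 k
  | Neg f => npair 4 (code f)
  | Conj f g => npair 5 (npair (code f) (code g))
  | BoxA f => npair 6 (code f)
  | BoxK f => npair 7 (code f)
  | AtA a f => npair 8 (npair a (code f))
  | AtK k f => npair 9 (npair k (code f))
  end.

Definition decidable_formulas (P : form -> Prop) : Prop :=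
  exists prog : rf, forall phi : form,
    (P phi -> eval prog [code phi] 1) /\ (~ P phi -> eval prog [code phi] 0).

(* Main.v *)
Require Import Defs.
From Stdlib Require Import List Arith Lia PeanoNat Bool Setoid Morphisms Classical ClassicalEpsilon.
Import ListNotations.

Lemma eProj' i v y : i < length v -> y = nth i v 0 -> eval (Proj i) v y.
Proof. intros H ->; now constructor. Qed.
Lemma eval_eq p v y y' : eval p v y -> y = y' -> eval p v y'.
Proof. now intros H <-. Qed.
Lemma evals1 p v w : eval p v w -> evals [p] v [w].
Proof. intros; repeat constructor; auto. Qed.
Lemma evals2 p q v w u : eval p v w -> eval q v u -> evals [p;q] v [w;u].
Proof. intros; repeat constructor; auto. Qed.

Definition addrf := Prec (Proj 0) (Comp Succ [Proj 1]).
Lemma addrf_ok a b : eval addrf [a; b] (a + b).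
Proof.
  induction a.
  - constructor. apply eProj'; simpl; auto.
  - eapply ePrecS; [apply IHa|]. eapply eComp.
    + apply evals1. apply eProj'; simpl; auto; lia.
    + simpl. constructor.
Qed.

Definition mulrf := Prec Zero (Comp addrf [Proj 1; Proj 2]).
Lemma mulrf_ok a b : eval mulrf [a; b] (a * b).
Proof.
  induction a.
  - constructor. constructor.
  - eapply ePrecS; [apply IHa|]. eapply eComp.
    + apply evals2; apply eProj'; simpl; auto; lia.
    + simpl. eapply eval_eq; [apply addrf_ok|]. lia.
Qed.

Definition predrf := Prec Zero (Proj 0).
Lemma predrf_ok a : eval predrf [a] (pred a).
Proof.
  destruct a.
  - constructor. constructor.
  - eapply ePrecS with (r := pred a).
    + induction a. constructor; constructor.
      eapply ePrecS; [apply IHa|]. apply eProj'; simpl; auto; lia.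
    + apply eProj'; simpl; auto; lia.
Qed.

Definition subrf := Prec (Proj 0) (Comp predrf [Proj 1]).
Lemma subrf_ok b a : eval subrf [b; a] (a - b).
Proof.
  induction b.
  - constructor. apply eProj'; simpl; auto; lia.
  - eapply ePrecS; [apply IHb|]. eapply eComp.
    + apply evals1; apply eProj'; simpl; auto; lia.
    + simpl. eapply eval_eq; [apply predrf_ok|]. lia.
Qed.

Definition powrf := Prec (Comp Succ [Zero]) (Comp mulrf [Proj 1; Proj 2]).
Lemma powrf_ok e b : eval powrf [e; b] (b ^ e).
Proof.
  induction e.
  - constructor. eapply eComp. apply evals1; constructor. constructor.
  - eapply ePrecS; [apply IHe|]. eapply eComp.
    + apply evals2; apply eProj'; simpl; auto; lia.
    + simpl. eapply eval_eq; [apply mulrf_ok|]. simpl; lia.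
Qed.

Definition constrf (k : nat) : rf := Nat.iter k (fun p => Comp Succ [p]) Zero.
Lemma constrf_ok k v : eval (constrf k) v k.
Proof.
  induction k; simpl. constructor.
  eapply eComp. apply evals1; apply IHk. constructor.
Qed.

Inductive ex := V (i:nat) | K (k:nat) | Pl (a b:ex) | Ml (a b:ex) | Mn (a b:ex)
 | Pw (a b:ex) | Sm (a body:ex).

Fixpoint bsum (n:nat) (f:nat->nat) : nat :=
  match n with 0 => 0 | S m => bsum m f + f m end.

Fixpoint den (e:ex) (env:list nat) : nat :=
  match e with
  | V i => nth i env 0 | K k => k
  | Pl a b => den a env + den b env
  | Ml a b => den a env * den b env
  | Mn a b => den a env - den b env
  | Pw a b => den a env ^ den b env
  | Sm a b => bsum (den a env) (fun k => den b (k :: env))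
  end.

Fixpoint projs (a n : nat) : list rf :=
  match n with 0 => [] | S m => Proj a :: projs (S a) m end.

Fixpoint compile (e:ex) (n:nat) : rf :=
  match e with
  | V i => if i <? n then Proj i else Zero
  | K k => constrf k
  | Pl a b => Comp addrf [compile a n; compile b n]
  | Ml a b => Comp mulrf [compile a n; compile b n]
  | Mn a b => Comp subrf [compile b n; compile a n]
  | Pw a b => Comp powrf [compile b n; compile a n]
  | Sm a b => Comp (Prec Zero (Comp addrf [Proj 1; Comp (compile b (S n)) (Proj 0 :: projs 2 n)]))
                    (compile a n :: projs 0 n)
  end.

Lemma projs_ok n a v : a + n <= length v -> evals (projs a n) v (firstn n (skipn a v)).
Proof.
  revert a; induction n; intros a H; simpl.
  - constructor.
  - assert (E : skipn a v = nth a v 0 :: skipn (S a) v).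
    { clear -H. revert v H; induction a; intros [|x v] H; simpl in *; try lia; auto.
      apply IHa; lia. }
    rewrite E. simpl. constructor.
    + apply eProj'; auto; lia.
    + apply IHn; lia.
Qed.

Lemma projs0 v : evals (projs 0 (length v)) v v.
Proof.
  pose proof (projs_ok (length v) 0 v ltac:(lia)) as H. simpl in H.
  rewrite firstn_all in H. exact H.
Qed.

Theorem compile_ok e : forall n env, length env = n -> eval (compile e n) env (den e env).
Proof.
  induction e; intros n env Hl; simpl.
  - destruct (i <? n) eqn:E.
    + apply Nat.ltb_lt in E. apply eProj'; auto; lia.
    + apply Nat.ltb_ge in E. rewrite nth_overflow by lia. constructor.
  - apply constrf_ok.
  - eapply eComp. apply evals2; eauto. apply addrf_ok.
  - eapply eComp. apply evals2; eauto. apply mulrf_ok.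
  - eapply eComp. apply evals2; eauto. apply subrf_ok.
  - eapply eComp. apply evals2; eauto. apply powrf_ok.
  - eapply eComp.
    + constructor. apply IHe1; auto. subst n. apply projs0.
    + generalize (den e1 env). intro k. induction k.
      * constructor. constructor.
      * eapply ePrecS; [apply IHk|]. eapply eComp.
        -- apply evals2.
           ++ apply eProj'; simpl; auto; lia.
           ++ eapply eComp.
              ** constructor. apply eProj'; simpl; auto; lia.
                 pose proof (projs_ok n 2 (k :: bsum k (fun k0 => den e2 (k0 :: env)) :: env)) as P.
                 simpl in P. rewrite <- Hl in P. rewrite firstn_all in P. simpl. rewrite <- Hl. apply P. lia.
              ** apply IHe2. simpl; lia.
        -- simpl. apply addrf_ok.
Qed.

Fixpoint liftc (m:nat) (e:ex) : ex :=
  match e with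
  | V i => if i <? m then V i else V (S i)
  | K k => K k
  | Pl a b => Pl (liftc m a) (liftc m b)
  | Ml a b => Ml (liftc m a) (liftc m b)
  | Mn a b => Mn (liftc m a) (liftc m b)
  | Pw a b => Pw (liftc m a) (liftc m b)
  | Sm a b => Sm (liftc m a) (liftc (S m) b)
  end.
Definition lift := liftc 0.
Lemma bsum_ext n f g : (forall k, k < n -> f k = g k) -> bsum n f = bsum n g.
Proof. induction n; simpl; intros; auto. rewrite IHn, H; auto. Qed.

Lemma den_liftc e : forall m env k, m <= length env ->
  den (liftc m e) (firstn m env ++ k :: skipn m env) = den e env.
Proof.
  induction e; intros m env k0 Hm; simpl; try (rewrite ?IHe1, ?IHe2; auto; fail).
  - destruct (i <? m) eqn:E; simpl.
    + apply Nat.ltb_lt in E. rewrite app_nth1 by (rewrite length_firstn; lia).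
      clear -E Hm. revert m env E Hm; induction i; intros [|m] [|x env] E Hm; simpl in *; auto; try lia.
      apply IHi; lia.
    + apply Nat.ltb_ge in E. rewrite app_nth2 by (rewrite length_firstn; lia).
      rewrite length_firstn. replace (S i - Nat.min m (length env)) with (S (i - m)) by lia.
      simpl. rewrite nth_skipn. f_equal. lia.
  - rewrite IHe1 by auto. apply bsum_ext; intros j _.
    apply (IHe2 (S m) (j :: env) k0). simpl; lia.
Qed.

Lemma den_lift e k env : den (lift e) (k :: env) = den e env.
Proof. apply (den_liftc e 0 env k). lia. Qed.

Definition hold e env := den e env <> 0.

Definition NOT e := Mn (K 1) e.
Definition AND a b := Ml a b.
Definition IMP a b := Pl (NOT a) b.
Definition IFF a b := AND (IMP a b) (IMP b a).
Definition EQ a b := NOT (Pl (Mn a b) (Mn b a)).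
Definition LT a b := Mn b a.
Definition LE a b := NOT (Mn a b).
Definition ALL e b := NOT (Sm e (NOT b)).
Definition DIV x y := Sm x (LE (Ml (Pl (V 0) (K 1)) (lift y)) (lift x)).
Definition MOD x y := Mn x (Ml y (DIV x y)).
Definition BIT n i := MOD (DIV n (Pw (K 2) i)) (K 2).

Lemma hold_NOT e env : hold (NOT e) env <-> ~ hold e env.
Proof. unfold hold, NOT; cbn [den]; split; intros; lia. Qed.
Lemma hold_AND a b env : hold (AND a b) env <-> hold a env /\ hold b env.
Proof. unfold hold, AND; cbn [den]. rewrite Nat.mul_eq_0. tauto. Qed.
Lemma hold_IMP a b env : hold (IMP a b) env <-> (hold a env -> hold b env).
Proof. unfold hold, IMP, NOT; cbn [den]. split.
  - intros H Ha. lia.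
  - intros H. destruct (Nat.eq_dec (den a env) 0) as [E|E]; [lia|specialize (H E); lia]. Qed.
Lemma hold_IFF a b env : hold (IFF a b) env <-> (hold a env <-> hold b env).
Proof. unfold IFF. rewrite hold_AND, !hold_IMP. tauto. Qed.
Lemma hold_EQ a b env : hold (EQ a b) env <-> den a env = den b env.
Proof. unfold hold, EQ, NOT; cbn [den]; split; intros; lia. Qed.
Lemma hold_LT a b env : hold (LT a b) env <-> den a env < den b env.
Proof. unfold hold, LT; cbn [den]; split; intros; lia. Qed.

Lemma bsum_eq0 n f : bsum n f = 0 <-> forall k, k < n -> f k = 0.
Proof.
  induction n; cbn [bsum]. split; intros; auto; lia.
  split.
  - intros H k Hk. assert (bsum n f = 0 /\ f n = 0) as [H1 H2] by lia.
    destruct (Nat.eq_dec k n). subst; auto. apply IHn; auto; lia.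
  - intros H. rewrite (proj2 IHn) by (intros; apply H; lia). rewrite H; lia.
Qed.

Lemma hold_ALL e b env : hold (ALL e b) env <-> forall k, k < den e env -> hold b (k :: env).
Proof.
  unfold hold, ALL, NOT; cbn [den].
  assert (H := bsum_eq0 (den e env) (fun k => 1 - den b (k :: env))).
  split.
  - intros H1 k Hk. assert (bsum (den e env) (fun k => 1 - den b (k :: env)) = 0) by lia.
    apply H with k in H0; auto. lia.
  - intros H1. rewrite (proj2 H). lia. intros k Hk. specialize (H1 k Hk). lia.
Qed.

Lemma den_ALL_le1 e b env : den (ALL e b) env <= 1.
Proof. unfold ALL, NOT; cbn [den]; lia. Qed.


Lemma bsum_lt n q : bsum n (fun k => if k <? q then 1 else 0) = Nat.min n q.
Proof.
  induction n; cbn [bsum]; auto. rewrite IHn. destruct (n <? q) eqn:E.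
  apply Nat.ltb_lt in E; lia. apply Nat.ltb_ge in E; lia.
Qed.

Lemma den_DIV x y env : den y env <> 0 -> den (DIV x y) env = den x env / den y env.
Proof.
  intros Hy. unfold DIV, LE, NOT. cbn [den].
  set (X := den x env). set (Y := den y env).
  rewrite (bsum_ext _ _ (fun k => if k <? X / Y then 1 else 0)).
  - rewrite bsum_lt. assert (X / Y <= X) by (apply Nat.div_le_upper_bound; nia). lia.
  - intros k Hk. rewrite !den_lift. fold X Y. cbn [nth].
    destruct (k <? X / Y) eqn:E.
    + apply Nat.ltb_lt in E. assert ((k+1) * Y <= X).
      { pose proof (Nat.mul_div_le X Y Hy). assert (k + 1 <= X / Y) by lia. apply Nat.le_trans with (Y * (X / Y)); [nia|auto]. } lia.
    + apply Nat.ltb_ge in E. assert ((k+1) * Y > X).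
      { destruct (le_lt_dec ((k+1)*Y) X); auto.
        assert (k + 1 <= X / Y) by (apply Nat.div_le_lower_bound; auto; lia). lia. } lia.
Qed.

Lemma den_MOD x y env : den y env <> 0 -> den (MOD x y) env = den x env mod den y env.
Proof.
  intros Hy. unfold MOD. cbn [den]. rewrite den_DIV by auto.
  pose proof (Nat.div_mod (den x env) (den y env) Hy). lia.
Qed.

Lemma den_BIT n i env : den (BIT n i) env = Nat.b2n (Nat.testbit (den n env) (den i env)).
Proof.
  unfold BIT. rewrite den_MOD by (simpl; lia). rewrite den_DIV.
  - simpl. rewrite Nat.testbit_spec'. auto.
  - simpl. apply Nat.pow_nonzero. lia.
Qed.

Lemma hold_BIT n i env : hold (BIT n i) env <-> Nat.testbit (den n env) (den i env) = true.
Proof. unfold hold. rewrite den_BIT. destruct (Nat.testbit _ _); cbn; split; intros; (congruence || lia). Qed.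

Fixpoint tri (s : nat) : nat := match s with 0 => 0 | S m => tri m + S m end.
Lemma tri2 s : s * (s + 1) = 2 * tri s.
Proof. induction s; simpl; nia. Qed.
Lemma npair_tri a b : npair a b = tri (a + b) + b.
Proof. unfold npair. rewrite tri2. rewrite Nat.mul_comm, Nat.div_mul by lia. lia. Qed.
Lemma tri_ge s : s <= tri s.
Proof. induction s; simpl; lia. Qed.
Lemma tri_mono s s' : s <= s' -> tri s <= tri s'.
Proof. induction 1; simpl; lia. Qed.
Lemma npair_inj a b a' b' : npair a b = npair a' b' -> a = a' /\ b = b'.
Proof.
  rewrite !npair_tri. intros H.
  destruct (lt_eq_lt_dec (a+b) (a'+b')) as [[L|E]|L].
  - pose proof (tri_mono (S (a+b)) (a'+b') L). simpl in H0. lia.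
  - rewrite E in H. lia.
  - pose proof (tri_mono (S (a'+b')) (a+b) L). simpl in H0. lia.
Qed.
Lemma npair_ge1 a b : a <= npair a b.
Proof. rewrite npair_tri. pose proof (tri_ge (a+b)). lia. Qed.
Lemma npair_ge2 a b : b <= npair a b.
Proof. rewrite npair_tri. lia. Qed.
Lemma npair_gt a b : 1 <= a -> b < npair a b.
Proof. rewrite npair_tri. pose proof (tri_ge (a+b)). lia. Qed.

Fixpoint num (f : nat -> bool) (len : nat) : nat :=
  match len with 0 => 0 | S l => Nat.b2n (f 0) + 2 * num (fun i => f (S i)) l end.
Lemma num_lt len : forall f, num f len < 2 ^ len.
Proof.
  induction len; intros f; simpl. lia.
  specialize (IHlen (fun i => f (S i))). destruct (f 0); simpl; lia.
Qed.
Lemma num_bit len : forall f i, i < len -> Nat.testbit (num f len) i = f i.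
Proof.
  induction len; intros f i Hi. lia. cbn [num].
  assert (IH := fun j Hj => IHlen (fun i0 => f (S i0)) j Hj).
  remember (num (fun i0 => f (S i0)) len) as m.
  destruct (f 0) eqn:E.
  - replace (Nat.b2n true + 2 * m) with (2 * m + 1) by (simpl; lia).
    destruct i. rewrite Nat.testbit_odd_0; auto.
    rewrite Nat.testbit_odd_succ'. apply IH. lia.
  - replace (Nat.b2n false + 2 * m) with (2 * m) by (simpl; lia).
    destruct i. rewrite Nat.testbit_even_0; auto.
    rewrite Nat.testbit_even_succ'. apply IH. lia.
Qed.

Lemma bsum_b2n_lt n v : v <= n -> bsum n (fun z => Nat.b2n (z <? v)) = v.
Proof.
  intros H. rewrite (bsum_ext _ _ (fun k => if k <? v then 1 else 0)).
  rewrite bsum_lt; lia. intros k _. destruct (k <? v); auto.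
Qed.
Lemma bsum_b2n_le n f : bsum n (fun z => Nat.b2n (f z)) <= n.
Proof. induction n; simpl; auto. destruct (f n); simpl; lia. Qed.

Definition dec (d : nat) : option (nat * nat) :=
  find (fun p => npair (fst p) (snd p) =? d) (list_prod (seq 0 (S d)) (seq 0 (S d))).
Lemma dec_some d t r : dec d = Some (t, r) -> npair t r = d.
Proof. unfold dec. intros H. apply find_some in H. destruct H as [_ H]. apply Nat.eqb_eq in H. auto. Qed.
Lemma dec_npair t r : dec (npair t r) = Some (t, r).
Proof.
  unfold dec. destruct (find _ _) as [[t' r']|] eqn:E.
  - apply find_some in E. destruct E as [_ E]. apply Nat.eqb_eq in E. simpl in E.
    apply npair_inj in E. destruct E; subst; auto.
  - exfalso. apply find_none with (x := (t, r)) in E.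
    + simpl in E. rewrite Nat.eqb_refl in E. discriminate.
    + apply in_prod; apply in_seq; pose proof (npair_ge1 t r); pose proof (npair_ge2 t r); lia.
Qed.

Section Params.
Variable c : nat.
Definition Bc := (c + 2) ^ (3 ^ c).
Definition oS := Bc * Bc * Bc.
Definition oVA := oS + Bc * Bc * Bc.
Definition oVK := oVA + (c + 1) * Bc.
Definition oNA := oVK + (c + 1) * Bc.
Definition oNK := oNA + (c + 1) * Bc.
Definition Lc := oNK + (c + 1) * Bc.
Definition Tlen := (c + 1) * (Bc * Bc).

Variable N : nat.
Definition Rb y x x' := Nat.testbit N (y * Bc * Bc + x * Bc + x').
Definition Sb x y y' := Nat.testbit N (oS + x * Bc * Bc + y * Bc + y').
Definition VAb p x := Nat.testbit N (oVA + p * Bc + x).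
Definition VKb p y := Nat.testbit N (oVK + p * Bc + y).
Definition NAv a := bsum (Bc - 1) (fun z => Nat.b2n (Nat.testbit N (oNA + a * Bc + z))).
Definition NKv k := bsum (Bc - 1) (fun z => Nat.b2n (Nat.testbit N (oNK + k * Bc + z))).

Variable T : nat.
Definition bt d x y := Nat.testbit T (d * Bc * Bc + x * Bc + y).

Definition RuleP d x y t r : Prop :=
 (t = 0 -> (bt d x y = true <-> VAb r x = true)) /\
 (t = 1 -> (bt d x y = true <-> VKb r y = true)) /\
 (t = 2 -> (bt d x y = true <-> x = NAv r)) /\
 (t = 3 -> (bt d x y = true <-> y = NKv r)) /\
 (t = 4 -> (bt d x y = true <-> ~ bt r x y = true)) /\
 (t = 5 -> forall f, f < r + 1 -> forall g, g < r + 1 -> npair f g = r ->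
      (bt d x y = true <-> bt f x y = true /\ bt g x y = true)) /\
 (t = 6 -> (bt d x y = true <-> forall x', x' < Bc -> Rb y x x' = true -> bt r x' y = true)) /\
 (t = 7 -> (bt d x y = true <-> forall y', y' < Bc -> Sb x y y' = true -> bt r x y' = true)) /\
 (t = 8 -> forall a, a < r + 1 -> forall g, g < r + 1 -> npair a g = r ->
      (bt d x y = true <-> bt g (NAv a) y = true)) /\
 (t = 9 -> forall k, k < r + 1 -> forall g, g < r + 1 -> npair k g = r ->
      (bt d x y = true <-> bt g x (NKv k) = true)).

Definition VerP : Prop :=
  forall d, d < c + 1 -> forall x, x < Bc -> forall y, y < Bc ->
  forall t, t < d + 1 -> forall r, r < d + 1 -> npair t r = d -> RuleP d x y t r.

Definition OnesP : Prop := forall x, x < Bc -> forall y, y < Bc -> bt c x y = true.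
End Params.

Definition FP (c : nat) : Prop :=
  forall N, N < 2 ^ Lc c -> forall T, T < 2 ^ Tlen c -> VerP c N T -> OnesP c T.

Lemma Bc_ge2 c : 2 <= Bc c.
Proof. unfold Bc. pose proof (Nat.pow_le_mono_r (c+2) 1 (3^c) ltac:(lia) ltac:(pose proof (Nat.pow_nonzero 3 c); lia)). simpl in H. lia. Qed.

Definition FMN (c N : nat) : AKModel :=
  {| WA := nat; WK := nat; WA_ne := inhabits 0; WK_ne := inhabits 0;
     RA := fun y x x' => x' < Bc c /\ Rb c N y x x' = true;
     SK := fun x y y' => y' < Bc c /\ Sb c N x y y' = true;
     VPA := fun p x => VAb c N p x = true;
     VPK := fun p y => VKb c N p y = true;
     VNA := NAv c N; VNK := NKv c N |}.

Lemma NAv_lt c N a : NAv c N a < Bc c.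
Proof. unfold NAv. pose proof (bsum_b2n_le (Bc c - 1) (fun z => Nat.testbit N (oNA c + a * Bc c + z))).
  pose proof (Bc_ge2 c). lia. Qed.
Lemma NKv_lt c N a : NKv c N a < Bc c.
Proof. unfold NKv. pose proof (bsum_b2n_le (Bc c - 1) (fun z => Nat.testbit N (oNK c + a * Bc c + z))).
  pose proof (Bc_ge2 c). lia. Qed.

Lemma sound c N T : VerP c N T -> forall phi, code phi <= c ->
  forall x y, x < Bc c -> y < Bc c -> (bt c T (code phi) x y = true <-> sat (FMN c N) x y phi).
Proof.
  intros HV phi. induction phi; intros Hc x y Hx Hy; simpl code in *;
  match goal with |- context [bt _ _ (npair ?t ?r)] =>
    assert (HR : RuleP c N T (npair t r) x y t r) by
      (apply HV; auto; try lia; pose proof (npair_ge1 t r); pose proof (npair_ge2 t r); lia) end;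
  destruct HR as (H0 & H1 & H2 & H3 & H4 & H5 & H6 & H7 & H8 & H9); simpl sat.
  - apply H0; auto.
  - apply H1; auto.
  - apply H2; auto.
  - apply H3; auto.
  - rewrite H4 by auto. pose proof (npair_gt 4 (code phi) ltac:(lia)).
    rewrite IHphi by (auto; lia). tauto.
  - pose proof (npair_gt 5 (npair (code phi1) (code phi2)) ltac:(lia)).
    pose proof (npair_ge1 (code phi1) (code phi2)). pose proof (npair_ge2 (code phi1) (code phi2)).
    rewrite (H5 eq_refl (code phi1) ltac:(lia) (code phi2) ltac:(lia) eq_refl).
    rewrite IHphi1, IHphi2 by (auto; lia). tauto.
  - pose proof (npair_gt 6 (code phi) ltac:(lia)).
    rewrite H6 by auto. split.
    + intros HH x' [Hx' HR]. apply IHphi; auto; lia.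
    + intros HH x' Hx' HR. apply IHphi; auto; lia.
  - pose proof (npair_gt 7 (code phi) ltac:(lia)).
    rewrite H7 by auto. split.
    + intros HH y' [Hy' HR]. apply IHphi; auto; lia.
    + intros HH y' Hy' HR. apply IHphi; auto; lia.
  - pose proof (npair_gt 8 (npair n (code phi)) ltac:(lia)).
    pose proof (npair_ge1 n (code phi)). pose proof (npair_ge2 n (code phi)).
    rewrite (H8 eq_refl n ltac:(lia) (code phi) ltac:(lia) eq_refl).
    apply IHphi; auto; try lia. apply NAv_lt.
  - pose proof (npair_gt 9 (npair n (code phi)) ltac:(lia)).
    pose proof (npair_ge1 n (code phi)). pose proof (npair_ge2 n (code phi)).
    rewrite (H9 eq_refl n ltac:(lia) (code phi) ltac:(lia) eq_refl).
    apply IHphi; auto; try lia. apply NKv_lt.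
Qed.

Definition Bx cv := Pw (Pl cv (K 2)) (Pw (K 3) cv).
Definition oSE cv := Ml (Ml (Bx cv) (Bx cv)) (Bx cv).
Definition oVAE cv := Pl (oSE cv) (Ml (Ml (Bx cv) (Bx cv)) (Bx cv)).
Definition oVKE cv := Pl (oVAE cv) (Ml (Pl cv (K 1)) (Bx cv)).
Definition oNAE cv := Pl (oVKE cv) (Ml (Pl cv (K 1)) (Bx cv)).
Definition oNKE cv := Pl (oNAE cv) (Ml (Pl cv (K 1)) (Bx cv)).
Definition LcE cv := Pl (oNKE cv) (Ml (Pl cv (K 1)) (Bx cv)).
Definition TlenE cv := Ml (Pl cv (K 1)) (Ml (Bx cv) (Bx cv)).

Definition idx3 a b e Bv := Pl (Pl (Ml (Ml a Bv) Bv) (Ml b Bv)) e.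
Definition bitT Tv cv d x y := BIT Tv (idx3 d x y (Bx cv)).
Definition RbE cv Nv y x x' := BIT Nv (idx3 y x x' (Bx cv)).
Definition SbE cv Nv x y y' := BIT Nv (Pl (Pl (Pl (oSE cv) (Ml (Ml x (Bx cv)) (Bx cv))) (Ml y (Bx cv))) y').
Definition VAbE cv Nv p x := BIT Nv (Pl (Pl (oVAE cv) (Ml p (Bx cv))) x).
Definition VKbE cv Nv p y := BIT Nv (Pl (Pl (oVKE cv) (Ml p (Bx cv))) y).
Definition NAvE cv Nv a := Sm (Mn (Bx cv) (K 1))
   (BIT (lift Nv) (Pl (Pl (oNAE (lift cv)) (Ml (lift a) (Bx (lift cv)))) (V 0))).
Definition NKvE cv Nv a := Sm (Mn (Bx cv) (K 1))
   (BIT (lift Nv) (Pl (Pl (oNKE (lift cv)) (Ml (lift a) (Bx (lift cv)))) (V 0))).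
Definition NP a b := Pl (DIV (Ml (Pl a b) (Pl (Pl a b) (K 1))) (K 2)) b.

Lemma den_Bx cv env : den (Bx cv) env = Bc (den cv env).
Proof. reflexivity. Qed.
Lemma den_oNAE cv env : den (oNAE cv) env = oNA (den cv env).
Proof. reflexivity. Qed.
Lemma den_oNKE cv env : den (oNKE cv) env = oNK (den cv env).
Proof. reflexivity. Qed.
Lemma den_LcE cv env : den (LcE cv) env = Lc (den cv env).
Proof. reflexivity. Qed.
Lemma den_TlenE cv env : den (TlenE cv) env = Tlen (den cv env).
Proof. reflexivity. Qed.
Lemma hold_bitT Tv cv d x y env : hold (bitT Tv cv d x y) env <->
  bt (den cv env) (den Tv env) (den d env) (den x env) (den y env) = true.
Proof. unfold bitT. rewrite hold_BIT. reflexivity. Qed.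
Lemma hold_RbE cv Nv y x x' env : hold (RbE cv Nv y x x') env <->
  Rb (den cv env) (den Nv env) (den y env) (den x env) (den x' env) = true.
Proof. unfold RbE. rewrite hold_BIT. reflexivity. Qed.
Lemma hold_SbE cv Nv x y y' env : hold (SbE cv Nv x y y') env <->
  Sb (den cv env) (den Nv env) (den x env) (den y env) (den y' env) = true.
Proof. unfold SbE. rewrite hold_BIT. reflexivity. Qed.
Lemma hold_VAbE cv Nv p x env : hold (VAbE cv Nv p x) env <->
  VAb (den cv env) (den Nv env) (den p env) (den x env) = true.
Proof. unfold VAbE. rewrite hold_BIT. reflexivity. Qed.
Lemma hold_VKbE cv Nv p x env : hold (VKbE cv Nv p x) env <->
  VKb (den cv env) (den Nv env) (den p env) (den x env) = true.
Proof. unfold VKbE. rewrite hold_BIT. reflexivity. Qed.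
Lemma den_NAvE cv Nv a env : den (NAvE cv Nv a) env = NAv (den cv env) (den Nv env) (den a env).
Proof.
  unfold NAvE, NAv. cbn [den]. rewrite den_Bx. apply bsum_ext. intros z _.
  rewrite den_BIT. cbn [den]. rewrite !den_lift, den_oNAE, den_Bx, den_lift. reflexivity.
Qed.
Lemma den_NKvE cv Nv a env : den (NKvE cv Nv a) env = NKv (den cv env) (den Nv env) (den a env).
Proof.
  unfold NKvE, NKv. cbn [den]. rewrite den_Bx. apply bsum_ext. intros z _.
  rewrite den_BIT. cbn [den]. rewrite !den_lift, den_oNKE, den_Bx, den_lift. reflexivity.
Qed.
Lemma den_NP a b env : den (NP a b) env = npair (den a env) (den b env).
Proof. unfold NP. cbn [den]. rewrite den_DIV by (cbn; lia). reflexivity. Qed.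


Lemma c_IMP a b env A B : (hold a env <-> A) -> (hold b env <-> B) -> (hold (IMP a b) env <-> (A -> B)).
Proof. intros; rewrite hold_IMP; tauto. Qed.
Lemma c_IFF a b env A B : (hold a env <-> A) -> (hold b env <-> B) -> (hold (IFF a b) env <-> (A <-> B)).
Proof. intros; rewrite hold_IFF; tauto. Qed.
Lemma c_AND a b env A B : (hold a env <-> A) -> (hold b env <-> B) -> (hold (AND a b) env <-> (A /\ B)).
Proof. intros; rewrite hold_AND; tauto. Qed.
Lemma c_NOT a env A : (hold a env <-> A) -> (hold (NOT a) env <-> ~ A).
Proof. intros; rewrite hold_NOT; tauto. Qed.
Lemma c_EQ a b env n m : den a env = n -> den b env = m -> (hold (EQ a b) env <-> n = m).
Proof. intros; rewrite hold_EQ; subst; tauto. Qed.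
Lemma c_ALL e b env n (P : nat -> Prop) : den e env = n -> (forall k, hold b (k :: env) <-> P k) ->
  (hold (ALL e b) env <-> forall k, k < n -> P k).
Proof. intros <- H. rewrite hold_ALL. split; intros H1 k Hk; apply H; auto; apply H1; auto. Qed.
Lemma c_bitT Tv cv d x y env C T D X Y : den cv env = C -> den Tv env = T -> den d env = D -> den x env = X -> den y env = Y ->
  (hold (bitT Tv cv d x y) env <-> bt C T D X Y = true).
Proof. intros; subst; apply hold_bitT. Qed.
Lemma c_RbE cv Nv y x x' env C N Y X X' : den cv env = C -> den Nv env = N -> den y env = Y -> den x env = X -> den x' env = X' ->
  (hold (RbE cv Nv y x x') env <-> Rb C N Y X X' = true).
Proof. intros; subst; apply hold_RbE. Qed.
Lemma c_SbE cv Nv y x x' env C N Y X X' : den cv env = C -> den Nv env = N -> den y env = Y -> den x env = X -> den x' env = X' ->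
  (hold (SbE cv Nv y x x') env <-> Sb C N Y X X' = true).
Proof. intros; subst; apply hold_SbE. Qed.
Lemma c_VAbE cv Nv p x env C N P X : den cv env = C -> den Nv env = N -> den p env = P -> den x env = X ->
  (hold (VAbE cv Nv p x) env <-> VAb C N P X = true).
Proof. intros; subst; apply hold_VAbE. Qed.
Lemma c_VKbE cv Nv p x env C N P X : den cv env = C -> den Nv env = N -> den p env = P -> den x env = X ->
  (hold (VKbE cv Nv p x) env <-> VKb C N P X = true).
Proof. intros; subst; apply hold_VKbE. Qed.
Lemma c_LT a b env n m : den a env = n -> den b env = m -> (hold (LT a b) env <-> n < m).
Proof. intros; rewrite hold_LT; subst; tauto. Qed.

Ltac dn := try (match goal with |- den _ _ = _ => repeat (progress (rewrite ?den_lift, ?den_NP, ?den_NAvE, ?den_NKvE, ?den_Bx; cbn [den nth])); try reflexivity end).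
Ltac hs1 := match goal with
  | |- hold (IMP _ _) _ <-> _ => apply c_IMP
  | |- hold (IFF _ _) _ <-> _ => apply c_IFF
  | |- hold (AND _ _) _ <-> _ => apply c_AND
  | |- hold (NOT _) _ <-> _ => apply c_NOT
  | |- hold (EQ _ _) _ <-> _ => apply c_EQ; dn
  | |- hold (LT _ _) _ <-> _ => apply c_LT; dn
  | |- hold (ALL _ _) _ <-> _ => apply c_ALL; [dn|]
  | |- hold (bitT _ _ _ _ _) _ <-> _ => apply c_bitT; dn
  | |- hold (RbE _ _ _ _ _) _ <-> _ => apply c_RbE; dn
  | |- hold (SbE _ _ _ _ _) _ <-> _ => apply c_SbE; dn
  | |- hold (VAbE _ _ _ _) _ <-> _ => apply c_VAbE; dn
  | |- hold (VKbE _ _ _ _) _ <-> _ => apply c_VKbE; dn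
  end.
Ltac hs := repeat (intros; hs1).

Definition L2 e := lift (lift e).
Section R.
Variables cv Nv Tv d x y t r : ex.
Definition R0 := IMP (EQ t (K 0)) (IFF (bitT Tv cv d x y) (VAbE cv Nv r x)).
Definition R1 := IMP (EQ t (K 1)) (IFF (bitT Tv cv d x y) (VKbE cv Nv r y)).
Definition R2 := IMP (EQ t (K 2)) (IFF (bitT Tv cv d x y) (EQ x (NAvE cv Nv r))).
Definition R3 := IMP (EQ t (K 3)) (IFF (bitT Tv cv d x y) (EQ y (NKvE cv Nv r))).
Definition R4 := IMP (EQ t (K 4)) (IFF (bitT Tv cv d x y) (NOT (bitT Tv cv r x y))).
Definition R5 := IMP (EQ t (K 5)) (ALL (Pl r (K 1)) (ALL (Pl (lift r) (K 1))
   (IMP (EQ (NP (V 1) (V 0)) (L2 r))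
     (IFF (bitT (L2 Tv) (L2 cv) (L2 d) (L2 x) (L2 y))
          (AND (bitT (L2 Tv) (L2 cv) (V 1) (L2 x) (L2 y)) (bitT (L2 Tv) (L2 cv) (V 0) (L2 x) (L2 y))))))).
Definition R6 := IMP (EQ t (K 6)) (IFF (bitT Tv cv d x y)
   (ALL (Bx cv) (IMP (RbE (lift cv) (lift Nv) (lift y) (lift x) (V 0))
                     (bitT (lift Tv) (lift cv) (lift r) (V 0) (lift y))))).
Definition R7 := IMP (EQ t (K 7)) (IFF (bitT Tv cv d x y)
   (ALL (Bx cv) (IMP (SbE (lift cv) (lift Nv) (lift x) (lift y) (V 0))
                     (bitT (lift Tv) (lift cv) (lift r) (lift x) (V 0))))).
Definition R8 := IMP (EQ t (K 8)) (ALL (Pl r (K 1)) (ALL (Pl (lift r) (K 1))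
   (IMP (EQ (NP (V 1) (V 0)) (L2 r))
     (IFF (bitT (L2 Tv) (L2 cv) (L2 d) (L2 x) (L2 y))
          (bitT (L2 Tv) (L2 cv) (V 0) (NAvE (L2 cv) (L2 Nv) (V 1)) (L2 y)))))).
Definition R9 := IMP (EQ t (K 9)) (ALL (Pl r (K 1)) (ALL (Pl (lift r) (K 1))
   (IMP (EQ (NP (V 1) (V 0)) (L2 r))
     (IFF (bitT (L2 Tv) (L2 cv) (L2 d) (L2 x) (L2 y))
          (bitT (L2 Tv) (L2 cv) (V 0) (L2 x) (NKvE (L2 cv) (L2 Nv) (V 1))))))).
Definition RULE := AND R0 (AND R1 (AND R2 (AND R3 (AND R4 (AND R5 (AND R6 (AND R7 (AND R8 R9)))))))).

Lemma hold_R0 env : hold R0 env <-> (den t env = 0 -> (bt (den cv env) (den Tv env) (den d env) (den x env) (den y env) = true <-> VAb (den cv env) (den Nv env) (den r env) (den x env) = true)).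
Proof.
  unfold R0. rewrite hold_IMP, hold_EQ, hold_IFF, hold_bitT, hold_VAbE. reflexivity.
Qed.
Lemma hold_R5 env : hold R5 env <-> (den t env = 5 -> forall f, f < den r env + 1 -> forall g, g < den r env + 1 ->
   npair f g = den r env -> (bt (den cv env) (den Tv env) (den d env) (den x env) (den y env) = true <->
     bt (den cv env) (den Tv env) f (den x env) (den y env) = true /\ bt (den cv env) (den Tv env) g (den x env) (den y env) = true)).
Proof.
  unfold R5, L2. rewrite hold_IMP, hold_EQ. 
  setoid_rewrite hold_ALL.
  setoid_rewrite hold_ALL.
  setoid_rewrite hold_IMP.
  setoid_rewrite hold_EQ.
  setoid_rewrite hold_IFF.
  setoid_rewrite hold_AND.
  setoid_rewrite hold_bitT.
  setoid_rewrite den_NP.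
  setoid_rewrite den_lift. 
  cbn [den nth]. setoid_rewrite den_lift.
  reflexivity.
Qed.

Notation C e := (den cv e). Notation NN e := (den Nv e). Notation TT e := (den Tv e).
Notation DD e := (den d e). Notation X e := (den x e). Notation Y e := (den y e).
Lemma hold_R1 env : hold R1 env <-> (den t env = 1 -> (bt (C env) (TT env) (DD env) (X env) (Y env) = true <-> VKb (C env) (NN env) (den r env) (Y env) = true)).
Proof. unfold R1. rewrite hold_IMP, hold_EQ, hold_IFF, hold_bitT, hold_VKbE. reflexivity. Qed.
Lemma hold_R2 env : hold R2 env <-> (den t env = 2 -> (bt (C env) (TT env) (DD env) (X env) (Y env) = true <-> X env = NAv (C env) (NN env) (den r env))).
Proof. unfold R2. rewrite hold_IMP, hold_EQ, hold_IFF, hold_bitT, hold_EQ, den_NAvE. reflexivity. Qed.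
Lemma hold_R3 env : hold R3 env <-> (den t env = 3 -> (bt (C env) (TT env) (DD env) (X env) (Y env) = true <-> Y env = NKv (C env) (NN env) (den r env))).
Proof. unfold R3. rewrite hold_IMP, hold_EQ, hold_IFF, hold_bitT, hold_EQ, den_NKvE. reflexivity. Qed.
Lemma hold_R4 env : hold R4 env <-> (den t env = 4 -> (bt (C env) (TT env) (DD env) (X env) (Y env) = true <-> ~ bt (C env) (TT env) (den r env) (X env) (Y env) = true)).
Proof. unfold R4. rewrite hold_IMP, hold_EQ, hold_IFF, hold_bitT, hold_NOT, hold_bitT. reflexivity. Qed.
Lemma hold_R6 env : hold R6 env <-> (den t env = 6 -> (bt (C env) (TT env) (DD env) (X env) (Y env) = true <->
   forall x', x' < Bc (C env) -> Rb (C env) (NN env) (Y env) (X env) x' = true -> bt (C env) (TT env) (den r env) x' (Y env) = true)).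
Proof. unfold R6. hs. Qed.
Lemma hold_R7 env : hold R7 env <-> (den t env = 7 -> (bt (C env) (TT env) (DD env) (X env) (Y env) = true <->
   forall y', y' < Bc (C env) -> Sb (C env) (NN env) (X env) (Y env) y' = true -> bt (C env) (TT env) (den r env) (X env) y' = true)).
Proof. unfold R7. do 3 (intros; first
  [ apply c_IMP | apply c_IFF | apply c_AND | apply c_NOT
  | apply c_EQ; dn | apply c_LT; dn | apply c_ALL; [dn|]
  | apply c_bitT; dn | apply c_RbE; dn | apply c_SbE; dn | apply c_VAbE; dn | apply c_VKbE; dn ]). hs. Qed.
Lemma hold_R8 env : hold R8 env <-> (den t env = 8 -> forall a, a < den r env + 1 -> forall g, g < den r env + 1 ->
   npair a g = den r env -> (bt (C env) (TT env) (DD env) (X env) (Y env) = true <->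
     bt (C env) (TT env) g (NAv (C env) (NN env) a) (Y env) = true)).
Proof. unfold R8, L2. hs. Qed.
Lemma hold_R9 env : hold R9 env <-> (den t env = 9 -> forall a, a < den r env + 1 -> forall g, g < den r env + 1 ->
   npair a g = den r env -> (bt (C env) (TT env) (DD env) (X env) (Y env) = true <->
     bt (C env) (TT env) g (X env) (NKv (C env) (NN env) a) = true)).
Proof. unfold R9, L2. hs. Qed.

Lemma hold_RULE env : hold RULE env <->
  RuleP (C env) (NN env) (TT env) (DD env) (X env) (Y env) (den t env) (den r env).
Proof.
  unfold RULE. rewrite !hold_AND, hold_R0, hold_R1, hold_R2, hold_R3, hold_R4, hold_R5,
    hold_R6, hold_R7, hold_R8, hold_R9. reflexivity. Qed.
End R.

Lemma c_RULE cv Nv Tv d x y t r env C N T D X Y t' r' :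
  den cv env = C -> den Nv env = N -> den Tv env = T -> den d env = D -> den x env = X ->
  den y env = Y -> den t env = t' -> den r env = r' ->
  (hold (RULE cv Nv Tv d x y t r) env <-> RuleP C N T D X Y t' r').
Proof. intros; subst; apply hold_RULE. Qed.

Definition L5 e := lift (lift (lift (lift (lift e)))).
Definition VER cv Nv Tv :=
  ALL (Pl cv (K 1)) (ALL (Bx (lift cv)) (ALL (Bx (L2 cv)) (ALL (Pl (V 2) (K 1)) (ALL (Pl (V 3) (K 1))
    (IMP (EQ (NP (V 1) (V 0)) (V 4)) (RULE (L5 cv) (L5 Nv) (L5 Tv) (V 4) (V 3) (V 2) (V 1) (V 0))))))).
Definition ONES cv Tv := ALL (Bx cv) (ALL (Bx (lift cv)) (bitT (L2 Tv) (L2 cv) (L2 cv) (V 1) (V 0))).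
Definition E := ALL (Pw (K 2) (LcE (V 0))) (ALL (Pw (K 2) (TlenE (V 1)))
   (IMP (VER (V 2) (V 1) (V 0)) (ONES (V 2) (V 0)))).

Lemma hold_VER cv Nv Tv env : hold (VER cv Nv Tv) env <-> VerP (den cv env) (den Nv env) (den Tv env).
Proof.
  unfold VER, VerP, L5, L2. hs. apply c_RULE; dn.
Qed.
Lemma hold_ONES cv Tv env : hold (ONES cv Tv) env <-> OnesP (den cv env) (den Tv env).
Proof. unfold ONES, OnesP, L2. hs. Qed.

Lemma hold_E c : hold E [c] <-> FP c.
Proof.
  unfold E, FP. apply c_ALL. cbn [den]. rewrite den_LcE. reflexivity.
  intros N. apply c_ALL. cbn [den]. rewrite den_TlenE. reflexivity.
  intros T. apply c_IMP. rewrite hold_VER. reflexivity. rewrite hold_ONES. reflexivity.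
Qed.

Lemma den_E_le1 c : den E [c] <= 1.
Proof. apply den_ALL_le1. Qed.

Fixpoint subs (f : form) : list form :=
  match f with
  | Neg g => f :: subs g
  | Conj g h => f :: subs g ++ subs h
  | BoxA g => f :: subs g
  | BoxK g => f :: subs g
  | AtA _ g => f :: subs g
  | AtK _ g => f :: subs g
  | _ => [f]
  end.
Fixpoint depth (f : form) : nat :=
  match f with
  | Neg g => depth g
  | Conj g h => Nat.max (depth g) (depth h)
  | BoxA g => S (depth g)
  | BoxK g => S (depth g)
  | AtA _ g => depth g
  | AtK _ g => depth g
  | _ => 0
  end.

Lemma subs_refl f : In f (subs f).
Proof. destruct f; simpl; auto. Qed.
Lemma subs_trans f g h : In g (subs h) -> In f (subs g) -> In f (subs h).
Proof.
  induction h; intros H1 H2; simpl in H1; destruct H1 as [<-|H1]; try exact H2; try contradiction;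
    simpl; right; try (apply IHh; auto; fail).
  apply in_app_iff in H1; apply in_app_iff. destruct H1; [left; apply IHh1 | right; apply IHh2]; auto.
Qed.
Lemma npair_ge3 a b : a + b <= npair a b.
Proof. rewrite npair_tri. pose proof (tri_ge (a+b)). lia. Qed.
Lemma subs_code f g : In g (subs f) -> code g <= code f.
Proof.
  induction f; simpl; intros H; try (destruct H as [<-|H]; [simpl; lia|]); try contradiction;
  repeat match goal with |- context [npair ?a ?b] =>
    lazymatch goal with _ : a + b <= npair a b |- _ => fail | _ => pose proof (npair_ge3 a b) end end.
  all: try (specialize (IHf H); lia).
  apply in_app_iff in H. destruct H; [specialize (IHf1 H) | specialize (IHf2 H)]; lia.
Qed.
Lemma subs_len f : length (subs f) <= code f + 1.
Proof.
  induction f; simpl; try lia;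
  repeat match goal with |- context [npair ?a ?b] =>
    lazymatch goal with _ : a + b <= npair a b |- _ => fail | _ => pose proof (npair_ge3 a b) end end;
  rewrite ?length_app; lia.
Qed.
Lemma depth_code f : depth f <= code f.
Proof.
  induction f; simpl; try lia;
  repeat match goal with |- context [npair ?a ?b] =>
    lazymatch goal with _ : a + b <= npair a b |- _ => fail | _ => pose proof (npair_ge3 a b) end end; lia.
Qed.
Lemma subs_depth f g : In g (subs f) -> depth g <= depth f.
Proof.
  induction f; simpl; intros H; try (destruct H as [<-|H]; [simpl; lia|]); try contradiction;
  try (specialize (IHf H); lia).
  apply in_app_iff in H. destruct H; [specialize (IHf1 H) | specialize (IHf2 H)]; lia.
Qed.

Definition pb (P : Prop) : bool := if excluded_middle_informative P then true else false.
Lemma pb_spec P : pb P = true <-> P.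
Proof. unfold pb. destruct (excluded_middle_informative P); split; auto; discriminate. Qed.

Definition pick (P : nat -> Prop) : nat :=
  match excluded_middle_informative (exists j, P j) with
  | left H => proj1_sig (constructive_indefinite_description _ H) | right _ => 0 end.
Lemma pick_spec P : (exists j, P j) -> P (pick P).
Proof.
  intros H. unfold pick. destruct (excluded_middle_informative _); [|contradiction].
  apply proj2_sig.
Qed.

Section Lists.
Variable A : Type.
Definition addl (l : list A) (x : A) : list A :=
  if excluded_middle_informative (In x l) then l else l ++ [x].
Definition addall (l xs : list A) : list A := fold_left addl xs l.
Lemma addall_prefix xs : forall l, exists s, addall l xs = l ++ s.
Proof.
  induction xs; intros l; simpl. exists []; rewrite app_nil_r; auto.
  unfold addall in *. simpl. destruct (IHxs (addl l a)) as [s Hs]. rewrite Hs.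
  unfold addl. destruct (excluded_middle_informative _). exists s; auto.
  exists (a :: s). rewrite <- app_assoc. auto.
Qed.
Lemma addall_in_l xs : forall l x, In x l -> In x (addall l xs).
Proof.
  intros l x H. destruct (addall_prefix xs l) as [s ->]. apply in_or_app; auto.
Qed.
Lemma addall_in xs : forall l x, In x xs -> In x (addall l xs).
Proof.
  induction xs; intros l x H; simpl in H. contradiction.
  unfold addall; simpl. destruct H as [<-|H].
  - apply addall_in_l. unfold addl. destruct (excluded_middle_informative _); auto.
    apply in_or_app; simpl; auto.
  - apply IHxs; auto.
Qed.
Lemma addall_len xs : forall l, length (addall l xs) <= length l + length xs.
Proof.
  induction xs; intros l; simpl. lia.
  unfold addall; simpl. specialize (IHxs (addl l a)). unfold addall in IHxs.
  unfold addl in *. destruct (excluded_middle_informative _); rewrite ?length_app in *; simpl in *; lia.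
Qed.
Lemma addall_nodup xs : forall l, NoDup l -> NoDup (addall l xs).
Proof.
  induction xs; intros l H; simpl; auto.
  unfold addall; simpl. apply IHxs. unfold addl. destruct (excluded_middle_informative _); auto.
  apply NoDup_app; auto. repeat constructor; auto. intros x Hx Hx'. simpl in Hx'. destruct Hx' as [<-|[]]; auto.
Qed.
End Lists.
Arguments addall {A}.

Lemma flat_map_len {A B} (f : A -> list B) l k : (forall a, length (f a) <= k) -> length (flat_map f l) <= length l * k.
Proof. intros H. induction l; simpl; auto. rewrite length_app. specialize (H a). lia. Qed.

Definition oL {A} (o : option A) : list A := match o with Some a => [a] | None => [] end.

Lemma forallb_ext_in {A} (f g : A -> bool) l : (forall a, In a l -> f a = g a) -> forallb f l = forallb g l.
Proof. induction l; simpl; intros H; auto. rewrite H, IHl; auto. Qed.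

Lemma dec3 B y x x' : x < B -> x' < B ->
  (y*B*B + x*B + x') / (B*B) = y /\ ((y*B*B + x*B + x') / B) mod B = x /\ (y*B*B + x*B + x') mod B = x'.
Proof.
  intros Hx Hx'.
  assert (E1 : (y*B*B + x*B + x') / B = y*B + x).
  { symmetry. apply Nat.div_unique with x'; auto. nia. }
  split; [|split].
  - symmetry. apply Nat.div_unique with (x*B + x'). nia. nia.
  - rewrite E1. symmetry. apply Nat.mod_unique with y; auto. nia.
  - symmetry. apply Nat.mod_unique with (y*B+x); auto. nia.
Qed.
Lemma dec2 B p x : x < B -> (p*B + x) / B = p /\ (p*B + x) mod B = x.
Proof.
  intros Hx. split.
  - symmetry. apply Nat.div_unique with x; auto. nia.
  - symmetry. apply Nat.mod_unique with p; auto. nia.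
Qed.

Section TV.
Variables c N : nat.
Fixpoint tv (fuel d x y : nat) : bool :=
  match fuel with 0 => false | S f =>
  match dec d with None => false | Some (t, r) =>
  match t with
  | 0 => VAb c N r x
  | 1 => VKb c N r y
  | 2 => x =? NAv c N r
  | 3 => y =? NKv c N r
  | 4 => negb (tv f r x y)
  | 5 => match dec r with Some (g, h) => tv f g x y && tv f h x y | None => false end
  | 6 => forallb (fun x' => negb (Rb c N y x x') || tv f r x' y) (seq 0 (Bc c))
  | 7 => forallb (fun y' => negb (Sb c N x y y') || tv f r x y') (seq 0 (Bc c))
  | 8 => match dec r with Some (a, g) => tv f g (NAv c N a) y | None => false end
  | 9 => match dec r with Some (k, g) => tv f g x (NKv c N k) | None => false end
  | _ => false
  end end end.

Lemma dec_bounds d t r : dec d = Some (t, r) -> t <= d /\ r <= d /\ (1 <= t -> r < d).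
Proof.
  intros H. apply dec_some in H. subst. split; [apply npair_ge1|split; [apply npair_ge2|]].
  apply npair_gt.
Qed.

Lemma tv_fuel f1 : forall f2 d x y, d < f1 -> d < f2 -> tv f1 d x y = tv f2 d x y.
Proof.
  induction f1; intros f2 d x y H1 H2. lia. destruct f2. lia. simpl.
  destruct (dec d) as [[t r]|] eqn:Ed; auto. apply dec_bounds in Ed. destruct Ed as (Et & Er & Ert).
  destruct t as [|[|[|[|[|[|[|[|[|[|t]]]]]]]]]]; auto.
  - rewrite (IHf1 f2); auto; lia.
  - destruct (dec r) as [[g h]|] eqn:Er2; auto. apply dec_bounds in Er2.
    rewrite (IHf1 f2 g), (IHf1 f2 h); auto; lia.
  - apply forallb_ext_in. intros a _. rewrite (IHf1 f2); auto; lia.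
  - apply forallb_ext_in. intros a _. rewrite (IHf1 f2); auto; lia.
  - destruct (dec r) as [[g h]|] eqn:Er2; auto. apply dec_bounds in Er2.
    rewrite (IHf1 f2); auto; lia.
  - destruct (dec r) as [[g h]|] eqn:Er2; auto. apply dec_bounds in Er2.
    rewrite (IHf1 f2); auto; lia.
Qed.

Definition tvd d x y := tv (S d) d x y.
Lemma tv_tvd f d x y : d < f -> tv f d x y = tvd d x y.
Proof. intros; apply tv_fuel; lia. Qed.

Definition T0 := num (fun i => tvd (i / (Bc c * Bc c)) ((i / Bc c) mod Bc c) (i mod Bc c)) (Tlen c).

Lemma T0_lt : T0 < 2 ^ Tlen c.
Proof. apply num_lt. Qed.

Lemma bt_T0 d x y : d < c + 1 -> x < Bc c -> y < Bc c -> bt c T0 d x y = tvd d x y.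
Proof.
  intros Hd Hx Hy. unfold bt, T0. rewrite num_bit.
  - destruct (dec3 (Bc c) d x y Hx Hy) as (E1 & E2 & E3). rewrite E1, E2, E3. auto.
  - unfold Tlen. nia.
Qed.

Lemma VerP_T0 : VerP c N T0.
Proof.
  intros d Hd x Hx y Hy t Ht r Hr Htr.
  assert (Ed : dec d = Some (t, r)) by (rewrite <- Htr; apply dec_npair).
  assert (Hrd : 1 <= t -> r < d) by (intros; subst; apply npair_gt; auto).
  assert (HB := Bc_ge2 c).
  assert (U : tvd d x y = tv (S d) d x y) by reflexivity.
  unfold RuleP. rewrite !bt_T0 by (auto; lia). rewrite U. simpl tv. rewrite Ed.
  refine (conj _ (conj _ (conj _ (conj _ (conj _ (conj _ (conj _ (conj _ (conj _ _))))))))); intros Et; subst t.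
  all: try (rewrite ?Nat.eqb_eq; tauto).
  - rewrite tv_tvd by lia. destruct (tvd r x y); simpl; split; congruence.
  - intros f Hf g Hg Hfg. rewrite <- Hfg, dec_npair. rewrite !bt_T0 by (auto; lia).
    rewrite !tv_tvd by lia. rewrite andb_true_iff. tauto.
  - rewrite forallb_forall. split.
    + intros H x' Hx' HR. rewrite bt_T0 by (auto; lia). specialize (H x' ltac:(apply in_seq; lia)).
      rewrite HR in H. simpl in H. rewrite tv_tvd in H by lia. auto.
    + intros H x' Hx'. apply in_seq in Hx'. destruct (Rb c N y x x') eqn:HR; simpl; auto.
      rewrite tv_tvd by lia. rewrite <- bt_T0 by (auto; lia). apply H; auto; lia.
  - rewrite forallb_forall. split.
    + intros H y' Hy' HR. rewrite bt_T0 by (auto; lia). specialize (H y' ltac:(apply in_seq; lia)).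
      rewrite HR in H. simpl in H. rewrite tv_tvd in H by lia. auto.
    + intros H y' Hy'. apply in_seq in Hy'. destruct (Sb c N x y y') eqn:HR; simpl; auto.
      rewrite tv_tvd by lia. rewrite <- bt_T0 by (auto; lia). apply H; auto; lia.
  - intros a Ha g Hg Hag. rewrite <- Hag, dec_npair. rewrite bt_T0 by (auto; try lia; apply NAv_lt).
    rewrite tv_tvd by lia. tauto.
  - intros a Ha g Hg Hag. rewrite <- Hag, dec_npair. rewrite bt_T0 by (auto; try lia; apply NKv_lt).
    rewrite tv_tvd by lia. tauto.
Qed.
End TV.

Lemma table_exists c N : exists T, T < 2 ^ Tlen c /\ VerP c N T.
Proof. exists (T0 c N). split. apply T0_lt. apply VerP_T0. Qed.

Section FMP.
Variable M : AKModel.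
Variable phi : form.
Variables (x0 : WA M) (y0 : WK M).

Definition witA (y : WK M) (x : WA M) (chi : form) : option (WA M) :=
  match excluded_middle_informative (exists w, RA M y x w /\ ~ sat M w y chi) with
  | left H => Some (proj1_sig (constructive_indefinite_description _ H)) | right _ => None end.
Lemma witA_spec y x chi : (exists w, RA M y x w /\ ~ sat M w y chi) ->
  exists w, witA y x chi = Some w /\ RA M y x w /\ ~ sat M w y chi.
Proof.
  intros H. unfold witA. destruct (excluded_middle_informative _) as [e|]; [|contradiction].
  eexists; split; [reflexivity|]. apply (proj2_sig (constructive_indefinite_description _ e)).
Qed.
Definition witK (x : WA M) (y : WK M) (chi : form) : option (WK M) :=
  match excluded_middle_informative (exists w, SK M x y w /\ ~ sat M x w chi) with
  | left H => Some (proj1_sig (constructive_indefinite_description _ H)) | right _ => None end.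
Lemma witK_spec x y chi : (exists w, SK M x y w /\ ~ sat M x w chi) ->
  exists w, witK x y chi = Some w /\ SK M x y w /\ ~ sat M x w chi.
Proof.
  intros H. unfold witK. destruct (excluded_middle_informative _) as [e|]; [|contradiction].
  eexists; split; [reflexivity|]. apply (proj2_sig (constructive_indefinite_description _ e)).
Qed.

Definition candA X Y := flat_map (fun x => flat_map (fun y => flat_map (fun chi => oL (witA y x chi)) (subs phi)) Y) X.
Definition candK X Y := flat_map (fun x => flat_map (fun y => flat_map (fun chi => oL (witK x y chi)) (subs phi)) Y) X.

Lemma candA_in X Y x y chi w : In x X -> In y Y -> In chi (subs phi) -> witA y x chi = Some w -> In w (candA X Y).
Proof.
  intros. unfold candA. apply in_flat_map. exists x. split; auto.
  apply in_flat_map. exists y. split; auto. apply in_flat_map. exists chi. split; auto.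
  rewrite H2. simpl; auto.
Qed.
Lemma candK_in X Y x y chi w : In x X -> In y Y -> In chi (subs phi) -> witK x y chi = Some w -> In w (candK X Y).
Proof.
  intros. unfold candK. apply in_flat_map. exists x. split; auto.
  apply in_flat_map. exists y. split; auto. apply in_flat_map. exists chi. split; auto.
  rewrite H2. simpl; auto.
Qed.
Lemma oL_len {A} (o : option A) : length (oL o) <= 1.
Proof. destruct o; simpl; lia. Qed.
Lemma candA_len X Y : length (candA X Y) <= length X * (length Y * (length (subs phi) * 1)).
Proof. unfold candA. apply flat_map_len. intros. apply flat_map_len. intros. apply flat_map_len. intros. apply oL_len. Qed.
Lemma candK_len X Y : length (candK X Y) <= length X * (length Y * (length (subs phi) * 1)).
Proof. unfold candK. apply flat_map_len. intros. apply flat_map_len. intros. apply flat_map_len. intros. apply oL_len. Qed.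

Definition c := code phi.
Definition X0 := addall [] (x0 :: map (VNA M) (seq 0 (c + 1))).
Definition Y0 := addall [] (y0 :: map (VNK M) (seq 0 (c + 1))).
Fixpoint lev (i : nat) : list (WA M) * list (WK M) :=
  match i with 0 => (X0, Y0)
  | S i => let p := lev i in (addall (fst p) (candA (fst p) (snd p)), addall (snd p) (candK (fst p) (snd p))) end.
Definition Xs i := fst (lev i).
Definition Ys i := snd (lev i).
Lemma Xs_S i : Xs (S i) = addall (Xs i) (candA (Xs i) (Ys i)).
Proof. reflexivity. Qed.
Lemma Ys_S i : Ys (S i) = addall (Ys i) (candK (Xs i) (Ys i)).
Proof. reflexivity. Qed.

Lemma Xs_prefix i j : i <= j -> exists s, Xs j = Xs i ++ s.
Proof.
  induction 1. exists []; rewrite app_nil_r; auto.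
  destruct IHle as [s Hs]. rewrite Xs_S. destruct (addall_prefix _ (candA (Xs m) (Ys m)) (Xs m)) as [s' Hs'].
  rewrite Hs', Hs. exists (s ++ s'). rewrite app_assoc; auto.
Qed.
Lemma Ys_prefix i j : i <= j -> exists s, Ys j = Ys i ++ s.
Proof.
  induction 1. exists []; rewrite app_nil_r; auto.
  destruct IHle as [s Hs]. rewrite Ys_S. destruct (addall_prefix _ (candK (Xs m) (Ys m)) (Ys m)) as [s' Hs'].
  rewrite Hs', Hs. exists (s ++ s'). rewrite app_assoc; auto.
Qed.
Lemma Xs_nodup i : NoDup (Xs i).
Proof. induction i. apply addall_nodup; constructor. rewrite Xs_S. apply addall_nodup; auto. Qed.
Lemma Ys_nodup i : NoDup (Ys i).
Proof. induction i. apply addall_nodup; constructor. rewrite Ys_S. apply addall_nodup; auto. Qed.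

Definition nx i := length (Xs i).
Definition ny i := length (Ys i).
Lemma nx_mono i j : i <= j -> nx i <= nx j.
Proof. intros H. destruct (Xs_prefix i j H) as [s Hs]. unfold nx. rewrite Hs, length_app. lia. Qed.
Lemma ny_mono i j : i <= j -> ny i <= ny j.
Proof. intros H. destruct (Ys_prefix i j H) as [s Hs]. unfold ny. rewrite Hs, length_app. lia. Qed.
Lemma Xs_nth i j k : i <= j -> k < nx i -> nth k (Xs j) x0 = nth k (Xs i) x0.
Proof. intros H Hk. destruct (Xs_prefix i j H) as [s Hs]. rewrite Hs. apply app_nth1. auto. Qed.
Lemma Ys_nth i j k : i <= j -> k < ny i -> nth k (Ys j) y0 = nth k (Ys i) y0.
Proof. intros H Hk. destruct (Ys_prefix i j H) as [s Hs]. rewrite Hs. apply app_nth1. auto. Qed.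

Definition beta i := (c + 2) ^ (3 ^ i).
Lemma beta_ge i : c + 2 <= beta i.
Proof.
  unfold beta. pose proof (Nat.pow_le_mono_r (c+2) 1 (3^i) ltac:(lia) ltac:(pose proof (Nat.pow_nonzero 3 i); lia)).
  simpl in H. lia.
Qed.
Lemma beta_S i : beta (S i) = beta i * beta i * beta i.
Proof. unfold beta. rewrite Nat.pow_succ_r', Nat.mul_comm, Nat.pow_mul_r. simpl. lia. Qed.
Lemma beta_mono i j : i <= j -> beta i <= beta j.
Proof. intros H. unfold beta. apply Nat.pow_le_mono_r. lia. apply Nat.pow_le_mono_r; lia. Qed.

Lemma lev_bound i : nx i <= beta i /\ ny i <= beta i.
Proof.
  induction i.
  - replace (beta 0) with (c + 2) by (unfold beta; simpl; lia). unfold nx, ny, Xs, Ys. simpl.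
    pose proof (addall_len _ (x0 :: map (VNA M) (seq 0 (c + 1))) []).
    pose proof (addall_len _ (y0 :: map (VNK M) (seq 0 (c + 1))) []).
    cbn [length] in *. rewrite length_map, length_seq in *. unfold X0, Y0. split; lia.
  - destruct IHi as [H1 H2]. pose proof (beta_ge i). rewrite beta_S.
    pose proof (subs_len phi). fold c in H0.
    set (b := beta i) in *.
    assert (Hk : nx i + nx i * (ny i * (length (subs phi) * 1)) <= b * b * b).
    { assert (nx i * (ny i * (length (subs phi) * 1)) <= b * (b * (c + 1))) by
        (apply Nat.mul_le_mono; auto; apply Nat.mul_le_mono; auto; lia).
      assert (b * (b * (c+1)) + b <= b * b * b) by nia. lia. }
    assert (Hk' : ny i + nx i * (ny i * (length (subs phi) * 1)) <= b * b * b).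
    { assert (nx i * (ny i * (length (subs phi) * 1)) <= b * (b * (c + 1))) by
        (apply Nat.mul_le_mono; auto; apply Nat.mul_le_mono; auto; lia).
      assert (b * (b * (c+1)) + b <= b * b * b) by nia. lia. }
    unfold nx, ny. rewrite Xs_S, Ys_S. split.
    + pose proof (addall_len _ (candA (Xs i) (Ys i)) (Xs i)). pose proof (candA_len (Xs i) (Ys i)).
      unfold nx, ny in *. lia.
    + pose proof (addall_len _ (candK (Xs i) (Ys i)) (Ys i)). pose proof (candK_len (Xs i) (Ys i)).
      unfold nx, ny in *. lia.
Qed.

Definition d0 := depth phi.
Definition fx j := nth j (Xs d0) x0.
Definition fy j := nth j (Ys d0) y0.
Local Notation B := (Bc c).
Lemma d0_le : d0 <= c.
Proof. apply depth_code. Qed.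
Lemma nx_B i : i <= d0 -> nx i <= B.
Proof.
  intros H. pose proof (nx_mono i d0 H). pose proof (lev_bound d0). pose proof (beta_mono d0 c d0_le).
  unfold Bc. unfold beta in *. lia.
Qed.
Lemma ny_B i : i <= d0 -> ny i <= B.
Proof.
  intros H. pose proof (ny_mono i d0 H). pose proof (lev_bound d0). pose proof (beta_mono d0 c d0_le).
  unfold Bc. unfold beta in *. lia.
Qed.

Lemma X0_head : exists s, X0 = x0 :: s.
Proof.
  unfold X0, addall. simpl. unfold addl at 2. destruct (excluded_middle_informative _) as [[]|].
  simpl. destruct (addall_prefix _ (map (VNA M) (seq 0 (c + 1))) [x0]) as [s Hs]. exists s. apply Hs.
Qed.
Lemma Y0_head : exists s, Y0 = y0 :: s.
Proof.
  unfold Y0, addall. simpl. unfold addl at 2. destruct (excluded_middle_informative _) as [[]|].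
  simpl. destruct (addall_prefix _ (map (VNK M) (seq 0 (c + 1))) [y0]) as [s Hs]. exists s. apply Hs.
Qed.
Lemma nx0_pos : 0 < nx 0.
Proof. destruct X0_head as [s Hs]. unfold nx, Xs. simpl. rewrite Hs. simpl. lia. Qed.
Lemma ny0_pos : 0 < ny 0.
Proof. destruct Y0_head as [s Hs]. unfold ny, Ys. simpl. rewrite Hs. simpl. lia. Qed.
Lemma fx0 : fx 0 = x0.
Proof. unfold fx. rewrite (Xs_nth 0 d0 0) by (auto using nx0_pos; lia). destruct X0_head as [s Hs]. unfold Xs. simpl. rewrite Hs. auto. Qed.
Lemma fy0 : fy 0 = y0.
Proof. unfold fy. rewrite (Ys_nth 0 d0 0) by (auto using ny0_pos; lia). destruct Y0_head as [s Hs]. unfold Ys. simpl. rewrite Hs. auto. Qed.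

Definition NAi a := pick (fun j => j < nx 0 /\ fx j = VNA M a).
Definition NKi a := pick (fun j => j < ny 0 /\ fy j = VNK M a).
Lemma NAi_spec a : a <= c -> NAi a < nx 0 /\ fx (NAi a) = VNA M a.
Proof.
  intros Ha. apply (pick_spec (fun j => j < nx 0 /\ fx j = VNA M a)).
  assert (In (VNA M a) (Xs 0)).
  { unfold Xs. simpl. apply addall_in. right. apply in_map. apply in_seq. lia. }
  apply In_nth with (d := x0) in H. destruct H as (j & Hj & Ej). exists j. split; auto.
  unfold fx. rewrite (Xs_nth 0 d0 j) by (auto; lia). auto.
Qed.
Lemma NKi_spec a : a <= c -> NKi a < ny 0 /\ fy (NKi a) = VNK M a.
Proof.
  intros Ha. apply (pick_spec (fun j => j < ny 0 /\ fy j = VNK M a)).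
  assert (In (VNK M a) (Ys 0)).
  { unfold Ys. simpl. apply addall_in. right. apply in_map. apply in_seq. lia. }
  apply In_nth with (d := y0) in H. destruct H as (j & Hj & Ej). exists j. split; auto.
  unfold fy. rewrite (Ys_nth 0 d0 j) by (auto; lia). auto.
Qed.
Lemma fx_inj i j : i < nx d0 -> j < nx d0 -> fx i = fx j -> i = j.
Proof. intros. eapply NoDup_nth; eauto. apply Xs_nodup. Qed.
Lemma fy_inj i j : i < ny d0 -> j < ny d0 -> fy i = fy j -> i = j.
Proof. intros. eapply NoDup_nth; eauto. apply Ys_nodup. Qed.

Lemma witA_lev i x y chi : i < d0 -> x < nx i -> y < ny i -> In chi (subs phi) ->
  (exists w, RA M (fy y) (fx x) w /\ ~ sat M w (fy y) chi) ->
  exists j, j < nx (S i) /\ RA M (fy y) (fx x) (fx j) /\ ~ sat M (fx j) (fy y) chi.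
Proof.
  intros Hi Hx Hy Hc Hw. apply witA_spec in Hw. destruct Hw as (w & Ew & HR & Hs).
  assert (Iw : In w (Xs (S i))).
  { rewrite Xs_S. apply addall_in. eapply candA_in; eauto.
    - unfold fx. rewrite (Xs_nth i d0 x) by (auto; lia). apply nth_In. auto.
    - unfold fy. rewrite (Ys_nth i d0 y) by (auto; lia). apply nth_In. auto. }
  apply In_nth with (d := x0) in Iw. destruct Iw as (j & Hj & Ej).
  exists j. split; auto. assert (fx j = w) as <- by (unfold fx; rewrite (Xs_nth (S i) d0 j) by (auto; lia); auto). auto.
Qed.
Lemma witK_lev i x y chi : i < d0 -> x < nx i -> y < ny i -> In chi (subs phi) ->
  (exists w, SK M (fx x) (fy y) w /\ ~ sat M (fx x) w chi) ->
  exists j, j < ny (S i) /\ SK M (fx x) (fy y) (fy j) /\ ~ sat M (fx x) (fy j) chi.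
Proof.
  intros Hi Hx Hy Hc Hw. apply witK_spec in Hw. destruct Hw as (w & Ew & HR & Hs).
  assert (Iw : In w (Ys (S i))).
  { rewrite Ys_S. apply addall_in. eapply candK_in; eauto.
    - unfold fx. rewrite (Xs_nth i d0 x) by (auto; lia). apply nth_In. auto.
    - unfold fy. rewrite (Ys_nth i d0 y) by (auto; lia). apply nth_In. auto. }
  apply In_nth with (d := y0) in Iw. destruct Iw as (j & Hj & Ej).
  exists j. split; auto. assert (fy j = w) as <- by (unfold fy; rewrite (Ys_nth (S i) d0 j) by (auto; lia); auto). auto.
Qed.

Definition LC x y x' := forall i, i < d0 -> x < nx i -> y < ny i -> x' < nx (S i).
Definition LCK x y y' := forall i, i < d0 -> x < nx i -> y < ny i -> y' < ny (S i).
Definition Rd y x x' := pb (RA M (fy y) (fx x) (fx x') /\ LC x y x').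
Definition Sd x y y' := pb (SK M (fx x) (fy y) (fy y') /\ LCK x y y').
Definition VAd p x := pb (VPA M p (fx x)).
Definition VKd p y := pb (VPK M p (fy y)).

Definition gb (i : nat) : bool :=
  if i <? oS c then Rd (i / (B*B)) ((i / B) mod B) (i mod B)
  else if i <? oVA c then Sd ((i - oS c) / (B*B)) (((i - oS c) / B) mod B) ((i - oS c) mod B)
  else if i <? oVK c then VAd ((i - oVA c) / B) ((i - oVA c) mod B)
  else if i <? oNA c then VKd ((i - oVK c) / B) ((i - oVK c) mod B)
  else if i <? oNK c then ((i - oNA c) mod B) <? NAi ((i - oNA c) / B)
  else ((i - oNK c) mod B) <? NKi ((i - oNK c) / B).
Definition Nn := num gb (Lc c).

Lemma idx3_lt y x x' : y < B -> x < B -> x' < B -> y*B*B + x*B + x' < B*B*B.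
Proof. intros. nia. Qed.
Lemma idx2_lt p x : p <= c -> x < B -> p*B + x < (c+1)*B.
Proof. intros. nia. Qed.

Ltac offs := unfold Lc, oNK, oNA, oVK, oVA, oS; fold B.

Lemma Rb_Nn y x x' : y < B -> x < B -> x' < B -> Rb c Nn y x x' = Rd y x x'.
Proof.
  intros Hy Hx Hx'. pose proof (idx3_lt y x x' Hy Hx Hx').
  unfold Rb, Nn. fold B. rewrite num_bit by (offs; lia). unfold gb.
  replace (y * B * B + x * B + x' <? oS c) with true by (symmetry; apply Nat.ltb_lt; offs; lia).
  destruct (dec3 B y x x' Hx Hx') as (E1 & E2 & E3). rewrite E1, E2, E3. auto.
Qed.
Lemma Sb_Nn x y y' : x < B -> y < B -> y' < B -> Sb c Nn x y y' = Sd x y y'.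
Proof.
  intros Hx Hy Hy'. pose proof (idx3_lt x y y' Hx Hy Hy').
  unfold Sb, Nn. fold B. rewrite num_bit by (offs; lia). unfold gb.
  replace (oS c + x * B * B + y * B + y' <? oS c) with false by (symmetry; apply Nat.ltb_ge; offs; lia).
  replace (oS c + x * B * B + y * B + y' <? oVA c) with true by (symmetry; apply Nat.ltb_lt; offs; lia).
  replace (oS c + x * B * B + y * B + y' - oS c) with (x * B * B + y * B + y') by lia.
  destruct (dec3 B x y y' Hy Hy') as (E1 & E2 & E3). rewrite E1, E2, E3. auto.
Qed.
Lemma VAb_Nn p x : p <= c -> x < B -> VAb c Nn p x = VAd p x.
Proof.
  intros Hp Hx. pose proof (idx2_lt p x Hp Hx).
  unfold VAb, Nn. fold B. rewrite num_bit by (offs; lia). unfold gb.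
  replace (oVA c + p * B + x <? oS c) with false by (symmetry; apply Nat.ltb_ge; offs; lia).
  replace (oVA c + p * B + x <? oVA c) with false by (symmetry; apply Nat.ltb_ge; offs; lia).
  replace (oVA c + p * B + x <? oVK c) with true by (symmetry; apply Nat.ltb_lt; offs; lia).
  replace (oVA c + p * B + x - oVA c) with (p * B + x) by lia.
  destruct (dec2 B p x Hx) as (E1 & E2). rewrite E1, E2. auto.
Qed.
Lemma VKb_Nn p x : p <= c -> x < B -> VKb c Nn p x = VKd p x.
Proof.
  intros Hp Hx. pose proof (idx2_lt p x Hp Hx).
  unfold VKb, Nn. fold B. rewrite num_bit by (offs; lia). unfold gb.
  replace (oVK c + p * B + x <? oS c) with false by (symmetry; apply Nat.ltb_ge; offs; lia).
  replace (oVK c + p * B + x <? oVA c) with false by (symmetry; apply Nat.ltb_ge; offs; lia).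
  replace (oVK c + p * B + x <? oVK c) with false by (symmetry; apply Nat.ltb_ge; offs; lia).
  replace (oVK c + p * B + x <? oNA c) with true by (symmetry; apply Nat.ltb_lt; offs; lia).
  replace (oVK c + p * B + x - oVK c) with (p * B + x) by lia.
  destruct (dec2 B p x Hx) as (E1 & E2). rewrite E1, E2. auto.
Qed.
Lemma NAv_Nn a : a <= c -> NAv c Nn a = NAi a.
Proof.
  intros Ha. unfold NAv. fold B. pose proof (NAi_spec a Ha) as [H1 _]. pose proof (nx_B 0 ltac:(lia)).
  rewrite (bsum_ext _ _ (fun z => Nat.b2n (z <? NAi a))). apply bsum_b2n_lt; lia.
  intros z Hz. f_equal. assert (z < B) by lia. pose proof (idx2_lt a z Ha H0).
  unfold Nn. rewrite num_bit by (offs; lia). unfold gb.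
  replace (oNA c + a * B + z <? oS c) with false by (symmetry; apply Nat.ltb_ge; offs; lia).
  replace (oNA c + a * B + z <? oVA c) with false by (symmetry; apply Nat.ltb_ge; offs; lia).
  replace (oNA c + a * B + z <? oVK c) with false by (symmetry; apply Nat.ltb_ge; offs; lia).
  replace (oNA c + a * B + z <? oNA c) with false by (symmetry; apply Nat.ltb_ge; offs; lia).
  replace (oNA c + a * B + z <? oNK c) with true by (symmetry; apply Nat.ltb_lt; offs; lia).
  replace (oNA c + a * B + z - oNA c) with (a * B + z) by lia.
  destruct (dec2 B a z H0) as (E1 & E2). rewrite E1, E2. auto.
Qed.
Lemma NKv_Nn a : a <= c -> NKv c Nn a = NKi a.
Proof.
  intros Ha. unfold NKv. fold B. pose proof (NKi_spec a Ha) as [H1 _]. pose proof (ny_B 0 ltac:(lia)).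
  rewrite (bsum_ext _ _ (fun z => Nat.b2n (z <? NKi a))). apply bsum_b2n_lt; lia.
  intros z Hz. f_equal. assert (z < B) by lia. pose proof (idx2_lt a z Ha H0).
  unfold Nn. rewrite num_bit by (offs; lia). unfold gb.
  replace (oNK c + a * B + z <? oS c) with false by (symmetry; apply Nat.ltb_ge; offs; lia).
  replace (oNK c + a * B + z <? oVA c) with false by (symmetry; apply Nat.ltb_ge; offs; lia).
  replace (oNK c + a * B + z <? oVK c) with false by (symmetry; apply Nat.ltb_ge; offs; lia).
  replace (oNK c + a * B + z <? oNA c) with false by (symmetry; apply Nat.ltb_ge; offs; lia).
  replace (oNK c + a * B + z <? oNK c) with false by (symmetry; apply Nat.ltb_ge; offs; lia).
  replace (oNK c + a * B + z - oNK c) with (a * B + z) by lia.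
  destruct (dec2 B a z H0) as (E1 & E2). rewrite E1, E2. auto.
Qed.

Lemma min_level (P : nat -> Prop) i : P i -> exists m, m <= i /\ P m /\ forall m', m' < m -> ~ P m'.
Proof.
  induction i as [i IH] using (well_founded_induction lt_wf). intros Pi.
  destruct (classic (exists m', m' < i /\ P m')) as [[m' [Hm' Pm']]|Hn].
  - destruct (IH m' Hm' Pm') as (m & H1 & H2 & H3). exists m. split; [lia|]. auto.
  - exists i. split; auto. split; auto. intros m' Hm' Pm'. apply Hn; eauto.
Qed.

Lemma claim psi : In psi (subs phi) -> forall i x y, depth psi + i <= d0 -> x < nx i -> y < ny i ->
  (sat (FMN c Nn) x y psi <-> sat M (fx x) (fy y) psi).
Proof.
  induction psi; intros Hin i x y Hd Hx Hy; simpl sat; simpl depth in Hd;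
  assert (HxB : x < B) by (pose proof (nx_B i ltac:(lia)); lia);
  assert (HyB : y < B) by (pose proof (ny_B i ltac:(lia)); lia);
  pose proof (subs_code phi _ Hin) as Hcode; fold c in Hcode; simpl code in Hcode;
  try (assert (Hsub : In psi (subs phi)) by (eapply subs_trans; [exact Hin| simpl; right; apply subs_refl])).
  - rewrite VAb_Nn by (pose proof (npair_ge2 0 n); lia). apply pb_spec.
  - rewrite VKb_Nn by (pose proof (npair_ge2 1 n); lia). apply pb_spec.
  - assert (Hn : n <= c) by (pose proof (npair_ge2 2 n); lia). rewrite NAv_Nn by auto.
    destruct (NAi_spec n Hn) as [H1 H2]. split.
    + intros ->. auto.
    + intros H. apply fx_inj; auto. pose proof (nx_mono i d0 ltac:(lia)); lia.
      pose proof (nx_mono 0 d0 ltac:(lia)); lia. congruence.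
  - assert (Hn : n <= c) by (pose proof (npair_ge2 3 n); lia). rewrite NKv_Nn by auto.
    destruct (NKi_spec n Hn) as [H1 H2]. split.
    + intros ->. auto.
    + intros H. apply fy_inj; auto. pose proof (ny_mono i d0 ltac:(lia)); lia.
      pose proof (ny_mono 0 d0 ltac:(lia)); lia. congruence.
  - rewrite (IHpsi Hsub i x y) by auto. tauto.
  - assert (H1 : In psi1 (subs phi)) by (eapply subs_trans; [exact Hin| simpl; right; apply in_or_app; left; apply subs_refl]).
    assert (H2 : In psi2 (subs phi)) by (eapply subs_trans; [exact Hin| simpl; right; apply in_or_app; right; apply subs_refl]).
    rewrite (IHpsi1 H1 i x y), (IHpsi2 H2 i x y) by (auto; lia). tauto.
  - split.
    + intros H w Hw. apply NNPP. intros Hns.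
      destruct (min_level (fun m => x < nx m /\ y < ny m) i (conj Hx Hy)) as (l & Hl & [Hlx Hly] & Hmin).
      destruct (witA_lev l x y psi ltac:(lia) Hlx Hly Hsub (ex_intro _ w (conj Hw Hns))) as (j & Hj & HR & Hs).
      apply Hs. pose proof (nx_mono (S l) (S i) ltac:(lia)). pose proof (nx_B (S i) ltac:(lia)).
      apply (IHpsi Hsub (S i) j y); auto; try lia.
      pose proof (ny_mono i (S i) ltac:(lia)); lia.
      apply H. split; [lia|]. rewrite Rb_Nn by lia. apply pb_spec. split; auto.
      intros i' Hi' Hx' Hy'. assert (l <= i'). { destruct (le_lt_dec l i'); auto. exfalso. apply (Hmin i'); auto. }
      pose proof (nx_mono (S l) (S i') ltac:(lia)). lia.
    + intros H x' [Hx' HR]. rewrite Rb_Nn in HR by lia. unfold Rd in HR. rewrite pb_spec in HR. destruct HR as [HR HL].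
      assert (x' < nx (S i)) by (apply HL; auto; lia).
      apply (IHpsi Hsub (S i) x' y); auto; try lia. pose proof (ny_mono i (S i) ltac:(lia)); lia.
  - split.
    + intros H w Hw. apply NNPP. intros Hns.
      destruct (min_level (fun m => x < nx m /\ y < ny m) i (conj Hx Hy)) as (l & Hl & [Hlx Hly] & Hmin).
      destruct (witK_lev l x y psi ltac:(lia) Hlx Hly Hsub (ex_intro _ w (conj Hw Hns))) as (j & Hj & HR & Hs).
      apply Hs. pose proof (ny_mono (S l) (S i) ltac:(lia)). pose proof (ny_B (S i) ltac:(lia)).
      apply (IHpsi Hsub (S i) x j); auto; try lia.
      pose proof (nx_mono i (S i) ltac:(lia)); lia.
      apply H. split; [lia|]. rewrite Sb_Nn by lia. apply pb_spec. split; auto.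
      intros i' Hi' Hx' Hy'. assert (l <= i'). { destruct (le_lt_dec l i'); auto. exfalso. apply (Hmin i'); auto. }
      pose proof (ny_mono (S l) (S i') ltac:(lia)). lia.
    + intros H y' [Hy' HR]. rewrite Sb_Nn in HR by lia. unfold Sd in HR. rewrite pb_spec in HR. destruct HR as [HR HL].
      assert (y' < ny (S i)) by (apply HL; auto; lia).
      apply (IHpsi Hsub (S i) x y'); auto; try lia. pose proof (nx_mono i (S i) ltac:(lia)); lia.
  - assert (Hn : n <= c) by (pose proof (npair_ge1 n (code psi)); pose proof (npair_ge2 8 (npair n (code psi))); lia).
    rewrite NAv_Nn by auto. destruct (NAi_spec n Hn) as [H1 H2]. rewrite <- H2.
    apply (IHpsi Hsub i); auto. pose proof (nx_mono 0 i ltac:(lia)); lia.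
  - assert (Hn : n <= c) by (pose proof (npair_ge1 n (code psi)); pose proof (npair_ge2 9 (npair n (code psi))); lia).
    rewrite NKv_Nn by auto. destruct (NKi_spec n Hn) as [H1 H2]. rewrite <- H2.
    apply (IHpsi Hsub i); auto. pose proof (ny_mono 0 i ltac:(lia)); lia.
Qed.

Lemma fmp_counter : ~ sat M x0 y0 phi -> exists N, N < 2 ^ Lc c /\ ~ sat (FMN c N) 0 0 phi.
Proof.
  intros Hn. exists Nn. split. apply num_lt.
  rewrite (claim phi (subs_refl phi) 0 0 0); auto using nx0_pos, ny0_pos.
  rewrite fx0, fy0. auto. unfold d0. lia.
Qed.
End FMP.

Lemma valid_FP phi : valid phi -> FP (code phi).
Proof.
  intros Hv N HN T HT HV x Hx y Hy.
  apply (proj2 (sound (code phi) N T HV phi (le_n _) x y Hx Hy)). apply Hv.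
Qed.

Lemma complete phi : ~ valid phi -> ~ FP (code phi).
Proof.
  intros Hnv HF. apply Hnv. intros M x y. apply NNPP. intros Hs.
  destruct (fmp_counter M phi x y Hs) as (N & HN & Hs'). unfold c in HN.
  destruct (table_exists (code phi) N) as (T & HT & HV).
  pose proof (HF N HN T HT HV 0 ltac:(pose proof (Bc_ge2 (code phi)); lia) 0 ltac:(pose proof (Bc_ge2 (code phi)); lia)) as Hb.
  apply Hs'. apply (sound (code phi) N T HV phi (le_n _) 0 0); auto; pose proof (Bc_ge2 (code phi)); lia.
Qed.

Theorem mainTheorem8 : decidable_formulas valid.
Proof.
  exists (compile E 1). intros phi.
  pose proof (compile_ok E 1 [code phi] eq_refl) as Hev.
  pose proof (den_E_le1 (code phi)) as Hle.
  pose proof (hold_E (code phi)) as Hh. unfold hold in Hh.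
  split.
  - intros Hv. apply valid_FP in Hv. apply Hh in Hv.
    eapply eval_eq; [exact Hev|]. lia.
  - intros Hnv. apply complete in Hnv.
    eapply eval_eq; [exact Hev|].
    destruct (Nat.eq_dec (den E [code phi]) 0); auto. exfalso. apply Hnv. apply Hh. auto.
Qed.
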